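(* Let $N\ge0$ be an integer, $p,q\ge0$ integers, and $a,b,a_1,\ldots,a_p,b_1,\ldots,b_q,z$ complex numbers with $z\ne0$ such that all denominators below are nonzero. Then \[ {}_{p+1}F_{q+1}^{[N]}\left(\begin{matrix}a,a_1,\ldots,a_p\\ b,b_1,\ldots,b_q\end{matrix};z\right) =\frac{(a)_{N} (b-a)_{N}}{(b)_{N}\, N!} \sum_{n=0}^{N}\frac{(1+n)_{N-n}}{(a+n)_{N-n}}\,\frac{(1+N-n)_{n}}{(b-a+N-n)_{n}}\, {}_{p}F_{q}^{[n]}\left(\begin{matrix}a_1,\ldots,a_p\\ b_1,\ldots,b_q\end{matrix};\frac{n}{N}z\right). \] (For $n=0$ the term ${}_{p}F_{q}^{[0]}$ equals $1$.)
   Context: $(x)_m=x(x+1)\cdots(x+m-1)$ is the rising factorial, $(x)_0=1$. The truncated generalized hypergeometric function is \[ {}_{p}F_{q}^{[N]}\left(\begin{matrix}a_1,\ldots,a_p\\ b_1,\ldots,b_q\end{matrix};z\right)=\sum_{m=0}^{N}\frac{(a_1)_m\cdots(a_p)_m}{(b_1)_m\cdots(b_q)_m\, m!}\,\frac{(N+1-m)_m}{(Nz^{-1}-m)_m}. \] *)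

(* Defs.v *)
From HB Require Import structures.
From mathcomp Require Import all_boot all_order all_algebra.
From mathcomp Require Import reals.
From mathcomp Require Export complex.
Set Implicit Arguments. Unset Strict Implicit. Unset Printing Implicit Defensive.
Import Order.TTheory GRing.Theory Num.Theory.
Local Open Scope ring_scope.

Definition rising {F : nzRingType} (x : F) (m : nat) : F :=
  \prod_(i < m) (x + i%:R).

Definition truncHyp {F : fieldType} (as_ bs : seq F) (N : nat) (z : F) : F :=
  \sum_(m < N.+1)
    (\prod_(a <- as_) rising a m) / ((\prod_(b <- bs) rising b m) * (m`!)%:R)
    * (rising (N.+1%:R - m%:R) m / rising (N%:R / z - m%:R) m).

(* Main.v *)
Require Import Defs.
From HB Require Import structures.
From mathcomp Require Import all_boot all_order all_algebra.
From mathcomp Require Import reals complex.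
From mathcomp Require Import ring zify.
Import Order.TTheory GRing.Theory Num.Theory.
Local Open Scope ring_scope.

Section Helpers.
Variable F : numFieldType.
Implicit Types x y : F.

Lemma rising0 x : rising x 0 = 1.
Proof. by rewrite /rising big_ord0. Qed.

Lemma risingS x m : rising x m.+1 = rising x m * (x + m%:R).
Proof. by rewrite /rising big_ord_recr. Qed.

Lemma rising_add x m k : rising x (m + k) = rising x m * rising (x + m%:R) k.
Proof.
elim: k => [|k IH]; first by rewrite addn0 rising0 mulr1.
by rewrite addnS !risingS IH natrD; ring.
Qed.

Lemma rising_fact n k : rising (1 + n%:R : F) k * (n`!)%:R = ((n + k)`!)%:R.
Proof.
elim: k => [|k IH]; first by rewrite rising0 mul1r addn0.
rewrite risingS addnS factS natrM -IH -natr1 natrD; ring.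
Qed.

Lemma rising_fall n m : (m <= n)%N ->
  rising (n.+1%:R - m%:R : F) m * ((n - m)`!)%:R = (n`!)%:R.
Proof.
move=> hmn; have -> : n.+1%:R - m%:R = 1 + (n - m)%:R :> F.
  by rewrite natrB // -nat1r; ring.
by rewrite rising_fact subnK.
Qed.

Lemma rising_zero n m : (n < m)%N -> rising (n.+1%:R - m%:R) m = 0 :> F.
Proof.
move=> hnm; have hi : (m - n.+1 < m)%N by lia.
rewrite /rising (bigD1 (Ordinal hi)) //= natrB //.
by rewrite addrC addrA subrK subrr mul0r.
Qed.

Lemma vandermonde x y M : rising (x + y) M =
  \sum_(k < M.+1) ('C(M, k))%:R * rising x k * rising y (M - k).
Proof.
elim: M => [|M IH]; first by rewrite big_ord1 !rising0 bin0 mulr1 mul1r.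
rewrite big_ord_recl /= bin0 mul1r rising0 mul1r subn0.
have E : forall k : 'I_M.+1, ('C(M.+1, (lift ord0 k)))%:R * rising x (lift ord0 k) *
    rising y (M.+1 - (lift ord0 k)) =
  ('C(M, k))%:R * rising x k.+1 * rising y (M - k) +
  ('C(M, k.+1))%:R * rising x k.+1 * rising y (M - k).
  by move=> k; rewrite lift0 binS subSS natrD; ring.
rewrite (eq_bigr _ (fun k _ => E k)) big_split /= addrCA.
have -> : rising y M.+1 + \sum_(i < M.+1) ('C(M, i.+1))%:R * rising x i.+1 * rising y (M - i)
  = \sum_(k < M.+1) ('C(M, k))%:R * rising x k * rising y (M.+1 - k).
  rewrite big_ord_recr /= bin_small // mul0r mul0r addr0.
  rewrite [RHS]big_ord_recl /= bin0 mul1r rising0 mul1r subn0.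
  by congr (_ + _); apply: eq_bigr => k _; rewrite lift0 /=.
rewrite risingS IH mulr_suml -big_split /=; apply: eq_bigr => k _.
have hk : (k <= M)%N by case: k => /= k; rewrite ltnS.
rewrite risingS subSn // risingS natrB //; ring.
Qed.


Lemma divE (r f g : F) : r * f = g -> f != 0 -> r = g / f.
Proof. by move=> <- hf; rewrite mulfK. Qed.

Lemma fact_neq0 n : ((n`!)%:R : F) != 0.
Proof. by rewrite pnatr_eq0 -lt0n fact_gt0. Qed.

Lemma pern N (a b : F) m k : (k + m <= N)%N ->
  rising (a + (k+m)%:R) (N - (k+m)) != 0 ->
  rising (b - a + N%:R - (k+m)%:R) (k+m) != 0 -> rising b N != 0 ->
  rising a N * rising (b - a) N / (rising b N * (N`!)%:R) *
  ((rising (1 + (k+m)%:R) (N - (k+m)) / rising (a + (k+m)%:R) (N - (k+m))) *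
   (rising (1 + N%:R - (k+m)%:R) (k+m) / rising (b - a + N%:R - (k+m)%:R) (k+m))) *
  rising ((k+m).+1%:R - m%:R) m
  = rising a m * rising (N.+1%:R - m%:R) m / rising b N *
   (('C(N - m, k))%:R * rising (a + m%:R) k * rising (b - a) (N - m - k)).
Proof.
move=> hN h1 h2 h3.
have hA : rising a N = rising a m * rising (a + m%:R) k * rising (a + (k+m)%:R) (N - (k+m)).
  by rewrite -rising_add (addnC k m) -rising_add subnKC // addnC.
have hB : rising (b - a) N = rising (b - a) (N - (k+m)) * rising (b - a + N%:R - (k+m)%:R) (k+m).
  by rewrite -{1}(subnK hN) rising_add natrB // addrA.
have f1 : rising (1 + (k+m)%:R : F) (N - (k+m)) = (N`!)%:R / ((k+m)`!)%:R.
  by apply: divE; [rewrite rising_fact subnKC | apply: fact_neq0].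
have f2 : rising (1 + N%:R - (k+m)%:R : F) (k+m) = (N`!)%:R / ((N - (k+m))`!)%:R.
  by apply: divE; [rewrite nat1r rising_fall | apply: fact_neq0].
have f3 : rising ((k+m).+1%:R - m%:R : F) m = ((k+m)`!)%:R / (k`!)%:R.
  by apply: divE; [rewrite -{2}(addnK m k) rising_fall // leq_addl | apply: fact_neq0].
have f4 : rising (N.+1%:R - m%:R : F) m = (N`!)%:R / ((N - m)`!)%:R.
  by apply: divE; [rewrite rising_fall //; lia | apply: fact_neq0].
have hmk : (N - m - k = N - (k + m))%N by lia.
have f5 : ('C(N - m, k))%:R = ((N - m)`!)%:R / ((k`!)%:R * ((N - (k+m))`!)%:R) :> F.
  apply: divE; last by rewrite mulf_neq0 // fact_neq0.
  by rewrite -natrM -natrM -hmk bin_fact //; lia.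
rewrite hA hB f1 f2 f3 f4 f5 hmk.
field; by rewrite ?fact_neq0 h1 h2 h3.
Qed.

Lemma core N (a b : F) m : (m <= N)%N -> rising b N != 0 ->
  (forall n, (n <= N)%N -> rising (a + n%:R) (N - n) != 0) ->
  (forall n, (n <= N)%N -> rising (b - a + N%:R - n%:R) n != 0) ->
  \sum_(n < N.+1) (rising a N * rising (b - a) N / (rising b N * (N`!)%:R) *
  ((rising (1 + n%:R) (N - n) / rising (a + n%:R) (N - n)) *
   (rising (1 + N%:R - n%:R) n / rising (b - a + N%:R - n%:R) n)) *
  rising (n.+1%:R - m%:R) m)
  = rising a m / rising b m * rising (N.+1%:R - m%:R) m.
Proof.
move=> hm hb ha hba.
pose G (n : nat) := (rising a N * rising (b - a) N / (rising b N * (N`!)%:R) *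
  ((rising (1 + n%:R) (N - n) / rising (a + n%:R) (N - n)) *
   (rising (1 + N%:R - n%:R) n / rising (b - a + N%:R - n%:R) n)) *
  rising (n.+1%:R - m%:R) m).
rewrite (eq_bigr (fun n : 'I_N.+1 => G n)) // -(big_mkord xpredT G) (@big_cat_nat _ _ _ m) //; last by apply: leqW.
rewrite big_nat_cond big1 ?add0r; last first.
  by move=> i /andP[/andP[_ hi] _]; rewrite /G rising_zero // mulr0.
rewrite -{1}[m]add0n big_addn big_mkord subSn //.
rewrite (eq_bigr (fun k : 'I_(N - m).+1 => rising a m * rising (N.+1%:R - m%:R) m / rising b N *
   (('C(N - m, k))%:R * rising (a + m%:R) k * rising (b - a) (N - m - k)))); last first.
  move=> k _; have hk : (k + m <= N)%N by case: k => /= k; lia.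
  by rewrite /G pern // ?ha ?hba.
rewrite -mulr_sumr -vandermonde.
have -> : a + m%:R + (b - a) = b + m%:R by ring.
have hbN : rising b N = rising b m * rising (b + m%:R) (N - m) by rewrite -rising_add subnKC.
move: hb; rewrite hbN mulf_eq0 negb_or => /andP[h1 h2].
rewrite /= add0r; field; by rewrite h1 h2.
Qed.
End Helpers.

Theorem theorem3p3 (R : realType) (N : nat) (a b z : R[i]) (as_ bs : seq R[i])
  (hz : z != 0)
  (hb : forall m, (m <= N)%N -> rising b m != 0)
  (hbs : forall bj, bj \in bs -> forall m, (m <= N)%N -> rising bj m != 0)
  (hzN : forall m, (m <= N)%N -> rising (N%:R / z - m%:R) m != 0)
  (hzn : forall n m, (m <= n)%N -> (n <= N)%N ->
           rising (n%:R / (n%:R / N%:R * z) - m%:R) m != 0)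
  (ha : forall n, (n <= N)%N -> rising (a + n%:R) (N - n) != 0)
  (hba : forall n, (n <= N)%N -> rising (b - a + N%:R - n%:R) n != 0) :
  truncHyp (a :: as_) (b :: bs) N z =
  rising a N * rising (b - a) N / (rising b N * (N`!)%:R) *
  \sum_(n < N.+1)
    (rising (1 + n%:R) (N - n) / rising (a + n%:R) (N - n)) *
    (rising (1 + N%:R - n%:R) n / rising (b - a + N%:R - n%:R) n) *
    truncHyp as_ bs n (n%:R / N%:R * z).
Proof.
pose c (m : nat) := (\prod_(x <- as_) rising x m) / ((\prod_(x <- bs) rising x m) * (m`!)%:R)
   / rising (N%:R / z - m%:R) m.
have A : forall n : 'I_N.+1, truncHyp as_ bs n (n%:R / N%:R * z) =
    \sum_(m < N.+1) c m * rising (n.+1%:R - m%:R) m.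
  move=> [n hn] /=; rewrite /truncHyp.
  rewrite (big_ord_widen N.+1 (fun m : nat =>
     (\prod_(a0 <- as_) rising a0 m) / ((\prod_(b0 <- bs) rising b0 m) * (m`!)%:R) *
     (rising (n.+1%:R - m%:R) m / rising (n%:R / (n%:R / N%:R * z) - m%:R) m))) //.
  rewrite big_mkcond; apply: eq_bigr => [[m hm]] _ /=.
  case: ifP => hmn; last first.
    by rewrite rising_zero ?mulr0 // ltnNge -ltnS hmn.
  have -> : rising (n%:R / (n%:R / N%:R * z) - m%:R) m = rising (N%:R / z - m%:R) m.
    case: m hm hmn => [|m] hm hmn; first by rewrite !rising0.
    have hn0 : (n%:R : R[i]) != 0 by rewrite pnatr_eq0; lia.
    have hN0 : (N%:R : R[i]) != 0 by rewrite pnatr_eq0; lia.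
    congr (rising (_ - _) _); field.
    by rewrite hn0 hN0 hz.
  by rewrite /c; ring.
rewrite (eq_bigr _ (fun n _ => congr1 (fun t => _ * t) (A n))).
rewrite mulr_sumr.
rewrite (eq_bigr (fun n : 'I_N.+1 => \sum_(m < N.+1) c m *
   (rising a N * rising (b - a) N / (rising b N * (N`!)%:R) *
  ((rising (1 + n%:R) (N - n) / rising (a + n%:R) (N - n)) *
   (rising (1 + N%:R - n%:R) n / rising (b - a + N%:R - n%:R) n)) *
  rising (n.+1%:R - m%:R) m))); last first.
  by move=> n _; rewrite !mulr_sumr; apply: eq_bigr => m _; ring.
rewrite exchange_big /= /truncHyp; apply: eq_bigr => [[m hm]] _ /=.
rewrite -mulr_sumr core ?hb //; try lia.
rewrite !big_cons /c !invfM; ring.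
Qed.
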